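(* Let $(X,d)$ be a complete metric space, $k\ge2$, $0<\rho<1$, and $\nu$ a coordinatewise $\rho$-contractive $(k+1)$-mean on $X$. Then $\nu$ admits exactly one stable reduction; moreover, if $\nu$ is symmetric, this stable reduction is symmetric.
   Context: A $k$-mean is a map $\mu:X^k\to X$ with $\mu(x,\ldots,x)=x$; symmetric means invariant under permutations of arguments. Coordinatewise $\rho$-contractive: $d(\nu(\mathbf{x}),\nu(\mathbf{y}))\le\rho\,d(x_j,y_j)$ whenever $\mathbf{x},\mathbf{y}$ differ only in coordinate $j$. A $k$-mean $\mu$ is a stable reduction of the $(k+1)$-mean $\nu$ if $\nu(x_1,\ldots,x_k,\mu(x_1,\ldots,x_k))=\mu(x_1,\ldots,x_k)$ for all $x_1,\ldots,x_k\in X$. *)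

(* Defs.v *)
From mathcomp Require Import all_boot all_order all_fingroup.
From Stdlib Require Import Reals.
Set Implicit Arguments. Unset Strict Implicit. Unset Printing Implicit Defensive.
Local Open Scope R_scope.

Definition is_metric (X : Type) (d : X -> X -> R) : Prop :=
  (forall x y, 0 <= d x y) /\
  (forall x y, d x y = 0 <-> x = y) /\
  (forall x y, d x y = d y x) /\
  (forall x y z, d x z <= d x y + d y z).

Definition cauchy_seq (X : Type) (d : X -> X -> R) (u : nat -> X) : Prop :=
  forall eps, 0 < eps -> exists N : nat,
    forall m n : nat, (N <= m)%nat -> (N <= n)%nat -> d (u m) (u n) < eps.

Definition converges_to (X : Type) (d : X -> X -> R) (u : nat -> X) (l : X) : Prop :=
  forall eps, 0 < eps -> exists N : nat, forall n : nat, (N <= n)%nat -> d (u n) l < eps.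

Definition complete_metric (X : Type) (d : X -> X -> R) : Prop :=
  is_metric d /\
  forall u : nat -> X, cauchy_seq d u -> exists l, converges_to d u l.

Definition is_mean (X : Type) (k : nat) (mu : ('I_k -> X) -> X) : Prop :=
  forall x : X, mu (fun _ => x) = x.

Definition symmetric_mean (X : Type) (k : nat) (mu : ('I_k -> X) -> X) : Prop :=
  forall (s : {perm 'I_k}) (x : 'I_k -> X), mu (fun i => x (s i)) = mu x.

Definition coord_contractive (X : Type) (d : X -> X -> R) (k : nat) (rho : R)
    (nu : ('I_k -> X) -> X) : Prop :=
  forall (x y : 'I_k -> X) (j : 'I_k),
    (forall i, i <> j -> x i = y i) -> d (nu x) (nu y) <= rho * d (x j) (y j).

(* The (k+1)-tuple (x_1, ..., x_k, m). *)
Definition snoc_tuple (X : Type) (k : nat) (x : 'I_k -> X) (m : X) : 'I_k.+1 -> X :=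
  fun i => match unlift ord_max i with Some j => x j | None => m end.

Definition stable_reduction (X : Type) (k : nat) (mu : ('I_k -> X) -> X)
    (nu : ('I_k.+1 -> X) -> X) : Prop :=
  is_mean mu /\ forall x : 'I_k -> X, nu (snoc_tuple x (mu x)) = mu x.

(* Main.v *)
Require Import Defs.
From mathcomp Require Import all_boot all_order all_fingroup.
From Stdlib Require Import Reals Lra Psatz FunctionalExtensionality ClassicalEpsilon.
Local Open Scope R_scope.
Set Implicit Arguments.

Fixpoint iterf (X : Type) (f : X -> X) (a0 : X) (n : nat) : X :=
  match n with O => a0 | S n => f (iterf f a0 n) end.

Lemma fix_uniq (X : Type) (d : X -> X -> R) (rho : R) (f : X -> X) a b :
  is_metric d -> rho < 1 -> (forall a b, d (f a) (f b) <= rho * d a b) ->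
  f a = a -> f b = b -> a = b.
Proof.
move=> [d0 [dz [ds dt]]] hr hc ha hb.
apply/dz. have := hc a b. rewrite ha hb => h. have := d0 a b. nra.
Qed.

Lemma banach (X : Type) (d : X -> X -> R) (rho : R) (f : X -> X) (a0 : X) :
  complete_metric d -> 0 <= rho -> rho < 1 ->
  (forall a b, d (f a) (f b) <= rho * d a b) -> exists l, f l = l.
Proof.
move=> [[d0 [dz [ds dt]]] hcomp] hr0 hr1 hc.
set u := iterf f a0.
have h1 : forall n p, d (u n) (u (n + p)%nat) <= rho ^ n * d (u O) (u p).
  elim=> [|n IH] p /=; first by rewrite add0n; lra.
  rewrite addSn /u /=. rewrite -/u.
  apply: Rle_trans (hc _ _) _. have := IH p. have := pow_le rho n hr0. change (d a0 (u p)) with (d (u 0%nat) (u p)). nra.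
set D := d (u O) (u 1%nat).
set B := D / (1 - rho).
have hB : B * (1 - rho) = D by rewrite /B; field; lra.
have hD : 0 <= D by apply: d0.
have hB0 : 0 <= B by rewrite /B; apply: Rmult_le_pos => //; apply: Rlt_le; apply: Rinv_0_lt_compat; lra.
have h2 : forall p, d (u O) (u p) <= B.
  elim=> [|p IH]; first by have := (proj2 (dz (u O) (u O)) erefl); lra.
  apply: Rle_trans (dt _ (u 1%nat) _) _.
  have := h1 1%nat p. rewrite /= Rmult_1_r => h. rewrite -/D.
  rewrite add1n in h. nra.
have [l hl] : exists l, converges_to d u l.
  apply: hcomp => eps heps.
  have ha : Rabs rho < 1 by rewrite Rabs_right; lra.
  have [N HN] := pow_lt_1_zero rho ha (eps / (B + 1)) ltac:(apply: Rdiv_lt_0_compat; lra).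
  exists N => m n /leP Hm /leP Hn.
  have key : forall m n, (N <= m)%coq_nat -> (m <= n)%coq_nat -> d (u m) (u n) < eps.
    clear m n Hm Hn => m n Hm Hmn.
    have -> : n = (m + (n - m))%nat by rewrite subnKC //; apply/leP.
    apply: Rle_lt_trans (h1 _ _) _.
    have := HN m Hm. rewrite Rabs_right; last by apply: Rle_ge; apply: pow_le.
    have := pow_le rho m hr0. have := h2 (n - m)%nat.
    move=> h3 h4 h5.
    have h6 : rho ^ m * (B + 1) < eps.
      have := Rmult_lt_compat_r (B + 1) _ _ ltac:(lra) h5.
      rewrite /Rdiv Rmult_assoc Rinv_l; lra.
    nra.
  case: (Nat.le_gt_cases m n) => hmn; first exact: key.
  rewrite ds; apply: key => //; lia.
exists l. apply/dz.
case: (Rle_lt_or_eq_dec 0 (d (f l) l) (d0 _ _)) => [hpos|<-] //.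
have [N HN] := hl (d (f l) l / 2) ltac:(lra).
have hA := HN N (leqnn N).
have hB' := HN N.+1 (leqnSn N).
have e1 := dt (f l) (f (u N)) l. have e2 := ds (f l) (f (u N)).
change (u N.+1) with (f (u N)) in hB'.
have := hc (u N) l. have := d0 (u N) l. move=> h3 h4. have h5 : rho * d (u N) l <= d (u N) l by nra. exfalso. lra.
Qed.

Lemma snoc_max (X : Type) (k : nat) (x : 'I_k -> X) m :
  snoc_tuple x m ord_max = m.
Proof. by rewrite /snoc_tuple unlift_none. Qed.

Lemma snoc_lift (X : Type) (k : nat) (x : 'I_k -> X) m j :
  snoc_tuple x m (lift ord_max j) = x j.
Proof. by rewrite /snoc_tuple liftK. Qed.

Theorem proposition8p3 (X : Type) (d : X -> X -> R) (k : nat) (rho : R)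
    (nu : ('I_k.+1 -> X) -> X) :
  complete_metric d -> (2 <= k)%nat -> (0 < rho)%R -> (rho < 1)%R ->
  is_mean nu -> coord_contractive d rho nu ->
  (exists mu : ('I_k -> X) -> X,
      stable_reduction mu nu /\
      forall mu' : ('I_k -> X) -> X, stable_reduction mu' nu -> mu' = mu) /\
  (symmetric_mean nu ->
   forall mu : ('I_k -> X) -> X, stable_reduction mu nu -> symmetric_mean mu).
Proof.
move=> hcm hk hr0 hr1 hmean hcon.
have hmet := proj1 hcm.
have k0 : leq 1 k by apply: leq_trans hk.
set T := fun (x : 'I_k -> X) m => nu (snoc_tuple x m).
have hT : forall x a b, d (T x a) (T x b) <= rho * d a b.
  move=> x a b; rewrite /T.
  have := hcon (snoc_tuple x a) (snoc_tuple x b) ord_max.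
  rewrite !snoc_max; apply => i hi.
  have hne : ord_max != i by apply/eqP => e; apply: hi.
  by case: (unlift_some hne) => j' _; rewrite /snoc_tuple => ->.
have uniq : forall x a b, T x a = a -> T x b = b -> a = b.
  move=> x a b; exact: (@fix_uniq X d rho (T x) a b hmet hr1 (hT x)).
have ex : forall x, exists m, T x m = m.
  move=> x; apply: (@banach X d rho (T x) (x (Ordinal k0)) hcm _ hr1 (hT x)); lra.
split.
  exists (fun x => proj1_sig (constructive_indefinite_description _ (ex x))).
  have spec : forall x, T x (proj1_sig (constructive_indefinite_description _ (ex x)))
                        = proj1_sig (constructive_indefinite_description _ (ex x)).
    by move=> x; case: (constructive_indefinite_description _ (ex x)).
  split.
    split.
      move=> x; apply: (uniq (fun _ => x)); first exact: spec.
      rewrite /T.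
      have -> : snoc_tuple (fun _ : 'I_k => x) x = (fun _ => x).
        by apply: functional_extensionality => i; rewrite /snoc_tuple; case: unlift.
      exact: hmean.
    exact: spec.
  move=> mu' [_ hst]; apply: functional_extensionality => x.
  apply: (uniq x); [exact: hst | exact: spec].
move=> hsym mu0 [hm hst] s x.
apply: (uniq (fun i => x (s i))); first exact: hst.
rewrite /T.
set S := lift_perm ord_max ord_max s.
have -> : snoc_tuple (fun i => x (s i)) (mu0 x) = (fun i => snoc_tuple x (mu0 x) (S i)).
  apply: functional_extensionality => i.
  case: (unliftP ord_max i) => [j ->|->].
    by rewrite snoc_lift /S lift_perm_lift snoc_lift.
  by rewrite snoc_max /S lift_perm_id snoc_max.
by rewrite hsym hst.
Qed.
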